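(* Let $t\ge 1$ and $r\ge 2$ be integers and let $\mathcal H$ be an $r$-uniform hypergraph with shadow graph $G$. (i) If $\mathcal H$ is Berge-$B_t$-free, then $G$ contains no copy of $B_{3rt}$ in which each of its $3rt$ triangles is the core of a Berge triangle in $\mathcal H$. (ii) If $\mathcal H$ is Berge-$F_t$-free, then $G$ contains no copy of $F_{3rt}$ in which each of its $3rt$ triangles is the core of a Berge triangle in $\mathcal H$.
   Context: The shadow graph of a hypergraph $\mathcal H$ is the graph on $V(\mathcal H)$ in which $xy$ is an edge iff some hyperedge contains both $x$ and $y$. A triangle $xyz$ of the shadow graph is the core of a Berge triangle in $\mathcal H$ if there are three distinct hyperedges $h_1,h_2,h_3$ of $\mathcal H$ with $\{x,y\}\subseteq h_1$, $\{y,z\}\subseteq h_2$, $\{x,z\}\subseteq h_3$. For a graph $F$, $\mathcal H$ contains a Berge-$F$ if there is an injection $\varphi:V(F)\to V(\mathcal H)$ and an injection $f:E(F)\to E(\mathcal H)$ with $\{\varphi(x),\varphi(y)\}\subseteq f(xy)$ for all $xy\in E(F)$; Berge-$F$-free means no Berge-$F$. The book $B_s$ has vertices $u,v,w_1,\dots,w_s$ and edges $uv,uw_i,vw_i$ ($1\le i\le s$); its triangles are $uvw_i$. The fan $F_s$ has vertices $u,v_1,\dots,v_s,w_1,\dots,w_s$ and edges $uv_i,uw_i,v_iw_i$ ($1\le i\le s$); its triangles are $uv_iw_i$. *)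

(* Defs.v *)
From mathcomp Require Import all_boot.
Set Implicit Arguments. Unset Strict Implicit. Unset Printing Implicit Defensive.

Definition uniform (V : finType) (r : nat) (H : {set {set V}}) : Prop :=
  forall h, h \in H -> #|h| = r.

Definition shadow_edge (V : finType) (H : {set {set V}}) (x y : V) : Prop :=
  x != y /\ exists h, [/\ h \in H, x \in h & y \in h].

Definition berge_triangle_core (V : finType) (H : {set {set V}}) (x y z : V) : Prop :=
  exists h1 h2 h3 : {set V},
    [/\ h1 \in H, h2 \in H & h3 \in H] /\
    [/\ h1 != h2, h2 != h3 & h1 != h3] /\
    [/\ (x \in h1) && (y \in h1), (y \in h2) && (z \in h2) & (x \in h3) && (z \in h3)].

(* A (simple) graph F on a finite vertex type W is given by its edge set
   EF : {set {set W}} of 2-element sets.  H contains a Berge-F. *)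
Definition berge_copy (W V : finType) (EF : {set {set W}}) (H : {set {set V}}) : Prop :=
  exists (phi : W -> V) (f : {set W} -> {set V}),
    [/\ injective phi, {in EF &, injective f} &
        forall e, e \in EF -> f e \in H /\ phi @: e \subset f e].

Definition berge_free (W V : finType) (EF : {set {set W}}) (H : {set {set V}}) : Prop :=
  ~ berge_copy EF H.

Definition shadow_copy (W V : finType) (EF : {set {set W}}) (H : {set {set V}})
  (phi : W -> V) : Prop :=
  injective phi /\
  forall x y, [set x; y] \in EF -> x != y -> shadow_edge H (phi x) (phi y).

(* Book B_s: vertices u = inl true, v = inl false, w_i = inr i. *)
Definition book_V (s : nat) : finType := (bool + 'I_s)%type.
Definition book (s : nat) : {set {set book_V s}} :=
  [set [set (inl true : book_V s); inl false]]
  :|: [set [set (inl true : book_V s); inr i] | i : 'I_s]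
  :|: [set [set (inl false : book_V s); inr i] | i : 'I_s].

(* Fan F_s: u = None, v_i = Some (true, i), w_i = Some (false, i). *)
Definition fan_V (s : nat) : finType := option (bool * 'I_s).
Definition fan (s : nat) : {set {set fan_V s}} :=
  [set [set (None : fan_V s); Some (true, i)] | i : 'I_s]
  :|: [set [set (None : fan_V s); Some (false, i)] | i : 'I_s]
  :|: [set [set (Some (true, i) : fan_V s); Some (false, i)] | i : 'I_s].

(* Main.v *)
Require Import Defs.
From mathcomp Require Import all_boot zify.
Set Implicit Arguments. Unset Strict Implicit. Unset Printing Implicit Defensive.

Lemma bad_bound (I V : finType) (H : {set {set V}}) r (E : I -> {set {set V}})
  (k : {set V} -> I -> V) :
  (forall h, h \in H -> #|h| = r) -> (forall i, E i \subset H) -> (forall X, injective (k X)) ->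
  (forall (X : {set V}) i h, h \in E i -> h \subset X -> k X i \in X) ->
  forall U : {set {set V}}, #|[set i | ~~ [disjoint E i & U]]| <= r * #|U|.
Proof.
move=> hu hEH kI hk U.
pose X := cover (U :&: H).
apply: (@leq_trans #|X|).
  rewrite -(card_imset _ (kI X)); apply: subset_leq_card.
  apply/subsetP => y /imsetP [i]; rewrite inE => bi ->.
  move: bi; rewrite disjoint_subset => /subsetPn [h hE]; rewrite inE negbK => hU.
  apply: (hk X i h hE); apply/subsetP => z zh; apply/bigcupP; exists h => //.
  by rewrite inE hU (subsetP (hEH i)).
apply: leq_trans (leq_card_cover _) _.
rewrite (eq_bigr (fun _ => r)); last by move=> h; rewrite inE => /andP [_ /hu].
rewrite sum_nat_const mulnC leq_mul2l; apply/orP; right.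
by apply: subset_leq_card; apply: subsetIl.
Qed.
Lemma card_bigcup_le (I T : finType) (S : {set I}) (E : I -> {set T}) :
  #|\bigcup_(i in S) E i| <= \sum_(i in S) #|E i|.
Proof.
apply: (big_ind2 (fun (A : {set T}) n => #|A| <= n)).
- by rewrite cards0.
- move=> A1 n1 A2 n2 h1 h2; apply: leq_trans (leq_card_setU A1 A2) _.
  exact: leq_add.
- by [].
Qed.

Lemma disj_mem (T : finType) (A B : {set T}) x :
  [disjoint A & B] -> x \in A -> x \in B -> False.
Proof. by rewrite disjoint_subset => /subsetP h /h; rewrite inE => /negP. Qed.

Lemma select (I T : finType) (U0 : {set T}) (E : I -> {set T}) (m r t : nat) :
  (forall i, 0 < #|E i| <= m) ->
  (forall U : {set T}, #|[set i | ~~ [disjoint E i & U]]| <= r * #|U|) ->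
  r * (#|U0| + m * t.-1) < #|I| ->
  exists S : {set I}, [/\ #|S| = t, (forall i, i \in S -> [disjoint E i & U0]) &
    {in S &, forall i j, i != j -> [disjoint E i & E j]}].
Proof.
move=> hE hB hc.
suff: forall k, k <= t -> exists S : {set I}, [/\ #|S| = k, (forall i, i \in S -> [disjoint E i & U0]) &
    {in S &, forall i j, i != j -> [disjoint E i & E j]}] by apply.
elim=> [|k IH] hk.
  by exists set0; split; [rewrite cards0| move=> i; rewrite inE| move=> i j; rewrite inE].
have [S [cS h0 hd]] := IH (ltnW hk).
pose U := U0 :|: \bigcup_(i in S) E i.
have cU : #|U| <= #|U0| + m * t.-1.
  apply: leq_trans (leq_card_setU _ _) _; rewrite leq_add2l.
  apply: leq_trans (card_bigcup_le _ _) _.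
  apply: leq_trans (_ : \sum_(i in S) m <= _).
    by apply: leq_sum => i _; case/andP: (hE i).
  rewrite sum_nat_const cS mulnC leq_mul2l; apply/orP; right.
  by rewrite -ltnS (ltn_predK hk).
have : ~~ ([set: I] \subset [set i | ~~ [disjoint E i & U]]).
  apply/negP => /subset_leq_card; rewrite cardsT => h.
  have := leq_ltn_trans (leq_trans h (leq_trans (hB U) (leq_mul (leqnn r) cU))) hc.
  by rewrite ltnn.
case/subsetPn => i _; rewrite inE negbK => di.
have iS : i \notin S.
  apply/negP => iS; case/andP: (hE i) => /card_gt0P [x xE] _.
  apply: (disj_mem di xE).
  by rewrite inE; apply/orP; right; apply/bigcupP; exists i.
exists (i |: S); split.
- by rewrite cardsU1 iS cS.
- move=> j; rewrite !inE => /orP [/eqP-> | jS]; last exact: h0.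
  by apply: disjointWr di; apply: subsetUl.
- have dj : forall j, j \in S -> [disjoint E i & E j].
    move=> j jS; apply: disjointWr di; apply: subset_trans (subsetUr _ _).
    by apply: (bigcup_sup j).
  move=> j1 j2; rewrite !inE => /orP [/eqP-> | j1S] /orP [/eqP-> | j2S].
  + by rewrite eqxx.
  + by move=> _; apply: dj.
  + by move=> _; rewrite disjoint_sym; apply: dj.
  + exact: hd.
Qed.

Lemma book_edges s (e : {set book_V s}) : e \in book s ->
  [\/ e = [set inl true; inl false], exists j, e = [set inl true; inr j]
    | exists j, e = [set inl false; inr j]].
Proof.
rewrite !inE => /orP [/orP [/eqP-> | /imsetP [j _ ->]] | /imsetP [j _ ->]].
- by constructor 1.
- by constructor 2; exists j.
- by constructor 3; exists j.
Qed.

Ltac nt nota E j x := exfalso; apply: (nota j x); rewrite ?inE ?eqxx ?orbT ?E //.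

Lemma part1 (V : finType) (H : {set {set V}}) (t r : nat) :
  1 <= t -> 2 <= r -> uniform r H ->
  (berge_free (book t) H ->
   ~ exists phi : book_V (3 * r * t) -> V,
       shadow_copy (book (3 * r * t)) H phi /\
       forall i : 'I_(3 * r * t),
         berge_triangle_core H (phi (inl true)) (phi (inl false)) (phi (inr i))).
Proof.
move=> ht hr hu hfree [phi [[phiI _] tri]].
have [a ha] := fin_all_exists tri.
have [b hb] := fin_all_exists ha.
have [c hc] := fin_all_exists hb.
have n0 : 0 < 3 * r * t by nia.
pose i0 : 'I_(3 * r * t) := Ordinal n0.
have sel := @select _ _ [set a i0] (fun i => [set b i; c i]) 2 r t.
have s1 : forall i, 0 < #|[set b i; c i]| <= 2.
  move=> i; rewrite cards2; have [_ [[_ -> _] _]] := hc i; by [].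
have s2 : forall U : {set {set V}}, #|[set i | ~~ [disjoint [set b i; c i] & U]]| <= r * #|U|.
  apply: (@bad_bound _ _ H r (fun i => [set b i; c i]) (fun X i => phi (inr i)) hu).
  + move=> i; have [[_ bH cH] _] := hc i.
    by apply/subsetP => h; rewrite !inE => /orP [/eqP-> | /eqP->].
  + by move=> X i j /phiI [].
  + move=> X i h; have [_ [_ [_ /andP [_ wb] /andP [_ wc]]]] := hc i.
    by rewrite !inE => /orP [/eqP-> | /eqP->] /subsetP; apply.
have s3 : r * (#|[set a i0]| + 2 * t.-1) < #|'I_(3 * r * t)|.
  by rewrite cards1 card_ord; nia.
have [S [cS h0 hd]] := sel s1 s2 s3.
pose g (j : 'I_t) : 'I_(3 * r * t) := enum_val (cast_ord (esym cS) j).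
have gS j : g j \in S by apply: enum_valP.
have gI : injective g by move=> j1 j2 /enum_val_inj /cast_ord_inj.
have uniqE : forall j1 j2 x, x \in [set b (g j1); c (g j1)] -> x \in [set b (g j2); c (g j2)] -> j1 = j2.
  move=> j1 j2 x x1 x2; apply: gI; apply/eqP; apply/negPn/negP => ne.
  exact: (disj_mem (hd _ _ (gS j1) (gS j2) ne) x1 x2).
have nota : forall j x, x \in [set b (g j); c (g j)] -> x = a i0 -> False.
  move=> j x xE xa; apply: (disj_mem (h0 _ (gS j)) xE); by rewrite xa inE.
apply: hfree.
pose phi' (x : book_V t) : V := match x with inl bb => phi (inl bb) | inr j => phi (inr (g j)) end.
pose f (e : {set book_V t}) : {set V} :=
  match [pick j | inr j \in e] with
  | Some j => if inl false \in e then b (g j) else c (g j)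
  | None => a i0 end.
have fuv : f [set inl true; inl false] = a i0.
  by rewrite /f; case: pickP => [j|//]; rewrite !inE.
have fu j : f [set inl true; inr j] = c (g j).
  rewrite /f; case: pickP => [j'|/(_ j)]; last by rewrite !inE eqxx orbT.
  by rewrite !inE /= => /eqP [->].
have fv j : f [set inl false; inr j] = b (g j).
  rewrite /f; case: pickP => [j'|/(_ j)]; last by rewrite !inE eqxx orbT.
  by rewrite !inE /= ?eqxx => /eqP [->].
exists phi', f; split.
- move=> [x|x] [y|y] /= /phiI // [] //; first by move=> ->.
  by move/gI->.
- move=> e1 e2 /book_edges [->|[j1 ->]|[j1 ->]] /book_edges [->|[j2 ->]|[j2 ->]];
    rewrite ?fuv ?fu ?fv // => E.
  all: try by first [ by nt nota E j2 (c (g j2)) | by nt nota E j2 (b (g j2)) | by nt nota E j1 (c (g j1)) | by nt nota E j1 (b (g j1))].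
  1-4: have ej : j1 = j2 by first [ by apply: (uniqE j1 j2 (c (g j1))); rewrite ?E ?inE ?eqxx ?orbT
                                 | by apply: (uniqE j1 j2 (b (g j1))); rewrite ?E ?inE ?eqxx ?orbT ].
  1-4: subst j2 => //.
  1-2: exfalso; have [_ [[_ /eqP ne _] _]] := hc (g j1); apply: ne; by rewrite E.
- move=> e /book_edges [->|[j ->]|[j ->]]; rewrite ?fuv ?fu ?fv.
  + have [[aH _ _] [_ [/andP [ua va] _ _]]] := hc i0.
    split => //; apply/subsetP => x /imsetP [y]; rewrite !inE => /orP [/eqP-> | /eqP->] ->//.
  + have [[_ _ cH] [_ [_ _ /andP [uc wc]]]] := hc (g j).
    split => //; apply/subsetP => x /imsetP [y]; rewrite !inE => /orP [/eqP-> | /eqP->] ->//.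
  + have [[_ bH _] [_ [_ /andP [vb wb] _]]] := hc (g j).
    split => //; apply/subsetP => x /imsetP [y]; rewrite !inE => /orP [/eqP-> | /eqP->] ->//.
Qed.
Lemma fan_edges s (e : {set fan_V s}) : e \in fan s ->
  [\/ exists j, e = [set None; Some (true, j)], exists j, e = [set None; Some (false, j)]
    | exists j, e = [set Some (true, j); Some (false, j)]].
Proof.
rewrite !inE => /orP [/orP [/imsetP [j _ ->] | /imsetP [j _ ->]] | /imsetP [j _ ->]].
- by constructor 1; exists j.
- by constructor 2; exists j.
- by constructor 3; exists j.
Qed.

Lemma part2 (V : finType) (H : {set {set V}}) (t r : nat) :
  1 <= t -> 2 <= r -> uniform r H ->
  (berge_free (fan t) H ->
   ~ exists phi : fan_V (3 * r * t) -> V,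
       shadow_copy (fan (3 * r * t)) H phi /\
       forall i : 'I_(3 * r * t),
         berge_triangle_core H (phi None) (phi (Some (true, i))) (phi (Some (false, i)))).
Proof.
move=> ht hr hu hfree [phi [[phiI _] tri]].
have [a ha] := fin_all_exists tri.
have [b hb] := fin_all_exists ha.
have [c hc] := fin_all_exists hb.
have sel := @select _ _ set0 (fun i => [set a i; b i; c i]) 3 r t.
have s1 : forall i, 0 < #|[set a i; b i; c i]| <= 3.
  move=> i; apply/andP; split; first by apply/card_gt0P; exists (a i); rewrite !inE eqxx.
  rewrite -setUA cardsU1 cards2; by case: (_ \notin _); case: (_ != _).
pose k (X : {set V}) i := if phi (Some (true, i)) \in X then phi (Some (true, i)) else phi (Some (false, i)).
have s2 : forall U : {set {set V}}, #|[set i | ~~ [disjoint [set a i; b i; c i] & U]]| <= r * #|U|.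
  apply: (@bad_bound _ _ H r (fun i => [set a i; b i; c i]) k hu).
  + move=> i; have [[aH bH cH] _] := hc i.
    by apply/subsetP => h; rewrite !inE => /orP [/orP [/eqP-> | /eqP->] | /eqP->].
  + move=> X i j; rewrite /k; case: ifP => _; case: ifP => _ /phiI [] //.
  + move=> X i h; have [_ [_ [/andP [_ va] /andP [vb wb] /andP [_ wc]]]] := hc i.
    rewrite /k; case: ifP => // vX.
    rewrite !inE => /orP [/orP [/eqP-> | /eqP->] | /eqP->] /subsetP sub.
    * by rewrite sub in vX.
    * by rewrite sub in vX.
    * exact: sub.
have s3 : r * (#|(set0 : {set {set V}})| + 3 * t.-1) < #|'I_(3 * r * t)|.
  by rewrite cards0 card_ord; nia.
have [S [cS _ hd]] := sel s1 s2 s3.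
pose g (j : 'I_t) : 'I_(3 * r * t) := enum_val (cast_ord (esym cS) j).
have gS j : g j \in S by apply: enum_valP.
have gI : injective g by move=> j1 j2 /enum_val_inj /cast_ord_inj.
have uniqE : forall j1 j2 x, x \in [set a (g j1); b (g j1); c (g j1)] ->
    x \in [set a (g j2); b (g j2); c (g j2)] -> j1 = j2.
  move=> j1 j2 x x1 x2; apply: gI; apply/eqP; apply/negPn/negP => ne.
  exact: (disj_mem (hd _ _ (gS j1) (gS j2) ne) x1 x2).
apply: hfree.
pose phi' (x : fan_V t) : V := match x with None => phi None | Some (bb, j) => phi (Some (bb, g j)) end.
pose f (e : {set fan_V t}) : {set V} :=
  match [pick j | Some (true, j) \in e] with
  | Some j => if None \in e then a (g j) else b (g j)
  | None => match [pick j | Some (false, j) \in e] with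
            | Some j => c (g j) | None => set0 end end.
have fa j : f [set None; Some (true, j)] = a (g j).
  rewrite /f; case: pickP => [j'|/(_ j)]; last by rewrite !inE eqxx orbT.
  by rewrite !inE /= => /eqP [->].
have fc j : f [set None; Some (false, j)] = c (g j).
  rewrite /f; case: pickP => [j'|_]; first by rewrite !inE.
  case: pickP => [j'|/(_ j)]; last by rewrite !inE eqxx orbT.
  by rewrite !inE /= => /eqP [->].
have fb j : f [set Some (true, j); Some (false, j)] = b (g j).
  rewrite /f; case: pickP => [j'|/(_ j)]; last by rewrite !inE eqxx.
  by rewrite !inE /= => /orP [/eqP [->] | ].
exists phi', f; split.
- move=> [[b1 j1]|] [[b2 j2]|] //= /phiI // [] //.
  by move=> -> /gI ->.
- move=> e1 e2 /fan_edges [[j1 ->]|[j1 ->]|[j1 ->]] /fan_edges [[j2 ->]|[j2 ->]|[j2 ->]];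
    rewrite ?fa ?fb ?fc // => E.
  1-9: have ej : j1 = j2 by first [ by apply: (uniqE j1 j2 (a (g j1))); rewrite ?E ?inE ?eqxx ?orbT
                                 | by apply: (uniqE j1 j2 (b (g j1))); rewrite ?E ?inE ?eqxx ?orbT
                                 | by apply: (uniqE j1 j2 (c (g j1))); rewrite ?E ?inE ?eqxx ?orbT ].
  1-9: subst j2 => //.
  1-6: exfalso; have [_ [[ne1 ne2 ne3] _]] := hc (g j1);
    first [ by move/eqP: ne1; apply; rewrite E | by move/eqP: ne2; apply; rewrite E
          | by move/eqP: ne3; apply; rewrite E | by move/eqP: ne1; apply; rewrite -E
          | by move/eqP: ne2; apply; rewrite -E | by move/eqP: ne3; apply; rewrite -E ].
- move=> e /fan_edges [[j ->]|[j ->]|[j ->]]; rewrite ?fa ?fb ?fc;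
  have [[aH bH cH] [_ [/andP [ua va] /andP [vb wb] /andP [uc wc]]]] := hc (g j);
  (split => //; apply/subsetP => x /imsetP [y]; rewrite !inE => /orP [/eqP-> | /eqP->] ->//).
Qed.

Theorem proposition4 (V : finType) (H : {set {set V}}) (t r : nat) :
  1 <= t -> 2 <= r -> uniform r H ->
  (berge_free (book t) H ->
   ~ exists phi : book_V (3 * r * t) -> V,
       shadow_copy (book (3 * r * t)) H phi /\
       forall i : 'I_(3 * r * t),
         berge_triangle_core H (phi (inl true)) (phi (inl false)) (phi (inr i)))
  /\
  (berge_free (fan t) H ->
   ~ exists phi : fan_V (3 * r * t) -> V,
       shadow_copy (fan (3 * r * t)) H phi /\
       forall i : 'I_(3 * r * t),
         berge_triangle_core H (phi None) (phi (Some (true, i))) (phi (Some (false, i)))).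
Proof.
move=> ht hr hu; split; [exact: part1 | exact: part2].
Qed.
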